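(* Let $n\ge 1$ and let $W\in\mathbb{C}^{2n\times 2n}$ be a normal skew-Hamiltonian matrix all of whose eigenvalues have nonzero imaginary parts. Then there exist a unitary symplectic matrix $U\in\mathbb{C}^{2n\times 2n}$ and a diagonal matrix $D\in\mathbb{C}^{n\times n}$ such that $$W=U\begin{bmatrix} D & 0\\ 0 & D^H\end{bmatrix}U^H .$$
   Context: Let $J=J_{2n}=\begin{bmatrix}0 & I_n\\ -I_n & 0\end{bmatrix}\in\mathbb{R}^{2n\times 2n}$. A matrix $A\in\mathbb{C}^{2n\times 2n}$ is Hamiltonian if $(JA)^H=JA$ and skew-Hamiltonian if $(JA)^H=-JA$. A matrix $Z\in\mathbb{C}^{2n\times 2n}$ is symplectic if $Z^HJZ=J$. ''Unitary symplectic'' means both unitary and symplectic. *)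

(* Defs.v *)
(* The complex field C is modelled by an arbitrary
   numClosedFieldType (algebraically closed field with conjugation, e.g. algC);
   conjugate transpose, unitary and normal matrices come from
   mathcomp/algebra/spectral.v ( M ^t* , unitarymx, normalmx ). *)
From HB Require Import structures.
From mathcomp Require Import all_boot all_order all_algebra.
Set Implicit Arguments. Unset Strict Implicit. Unset Printing Implicit Defensive.
Import Order.TTheory GRing.Theory Num.Theory.
Local Open Scope ring_scope.
Local Open Scope sesquilinear_scope.

Definition Jmx (C : numClosedFieldType) n : 'M[C]_(n + n) :=
  block_mx 0 1%:M (- 1%:M) 0.

Definition skew_hamiltonian (C : numClosedFieldType) n (A : 'M[C]_(n + n)) : Prop :=
  (Jmx C n *m A) ^t* = - (Jmx C n *m A).

Definition symplecticmx (C : numClosedFieldType) n (Z : 'M[C]_(n + n)) : Prop :=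
  Z ^t* *m Jmx C n *m Z = Jmx C n.

(* Main.v *)
Require Import Defs.
From HB Require Import structures.
From mathcomp Require Import zify.
From mathcomp Require Import all_boot all_order all_algebra.
Set Implicit Arguments. Unset Strict Implicit. Unset Printing Implicit Defensive.
Import Order.TTheory GRing.Theory Num.Theory Num.Def.
Local Open Scope ring_scope.
Local Open Scope sesquilinear_scope.

Section H.
Variable C : numClosedFieldType.

Lemma ctmul m n p (A : 'M[C]_(m, n)) (B : 'M[C]_(n, p)) :
  (A *m B)^t* = B^t* *m A^t*.
Proof. by rewrite trmx_mul map_mxM. Qed.

Definition sel m p (f : 'I_p -> 'I_m) : 'M[C]_(m, p) :=
  \matrix_(j, i) (j == f i)%:R.

Lemma mul_sel k m p (f : 'I_p -> 'I_m) (A : 'M[C]_(k, m)) :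
  A *m sel f = \matrix_(a, i) A a (f i).
Proof.
apply/matrixP => a i; rewrite !mxE (bigD1 (f i)) //= big1 => [|j /negbTE ji].
  by rewrite !mxE eqxx mulr1 addr0.
by rewrite !mxE ji mulr0.
Qed.

Lemma sel_mul k m p (f : 'I_p -> 'I_m) (B : 'M[C]_(m, k)) :
  (sel f)^T *m B = \matrix_(i, b) B (f i) b.
Proof.
apply/matrixP => i b; rewrite !mxE (bigD1 (f i)) //= big1 => [|j /negbTE ji].
  by rewrite !mxE eqxx mul1r addr0.
by rewrite !mxE ji mul0r.
Qed.

Lemma sel_ct m p (f : 'I_p -> 'I_m) : (sel f)^t* = (sel f)^T.
Proof. by apply/matrixP => i j; rewrite !mxE conjC_nat. Qed.

Lemma selTsel m p (f : 'I_p -> 'I_m) : injective f -> (sel f)^T *m sel f = 1%:M.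
Proof.
move=> fi; rewrite sel_mul; apply/matrixP => i j; rewrite !mxE.
by rewrite (inj_eq fi).
Qed.

Lemma diag_sel m p (f : 'I_p -> 'I_m) (d : 'rV[C]_m) :
  diag_mx d *m sel f = sel f *m diag_mx (\row_i d 0 (f i)).
Proof.
apply/matrixP => j i; rewrite mul_diag_mx mul_mx_diag !mxE.
by case: eqP => [->|]; rewrite ?mulr0 ?mul0r ?mulr1 ?mul1r.
Qed.

Lemma Jct n : (Jmx C n)^t* = - Jmx C n.
Proof.
rewrite /Jmx tr_block_mx map_block_mx !trmx0 !map_mx0 trmx1 map_mx1 linearN /= map_mxN trmx1 map_mx1.
by rewrite opp_block_mx !oppr0 opprK.
Qed.

Lemma JJ n : Jmx C n *m Jmx C n = - 1%:M.
Proof.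
rewrite /Jmx mulmx_block !mulmx0 !mul0mx !mulmx1 !mulmxN !mulmx1 !add0r !addr0.
rewrite (scalar_mx_block n n 1) opp_block_mx oppr0.
by [].
Qed.

Lemma JJct n : Jmx C n *m (Jmx C n)^t* = 1%:M.
Proof. by rewrite Jct mulmxN JJ opprK. Qed.

Lemma JctJ n : (Jmx C n)^t* *m Jmx C n = 1%:M.
Proof. by rewrite Jct mulNmx JJ opprK. Qed.

Lemma sel_proj k m (S : {pred 'I_m}) (A : 'M[C]_(k, m)) :
  (forall a j, j \notin S -> A a j = 0) ->
  A *m sel (@enum_val _ S) *m (sel (@enum_val _ S))^T = A.
Proof.
move=> Az; apply/matrixP => a j; rewrite mul_sel !mxE.
case jS: (j \in S).
  rewrite (bigD1 (enum_rank_in jS j)) //= !mxE enum_rankK_in // eqxx mulr1.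
  rewrite big1 ?addr0 // => i ne; rewrite !mxE.
  case: eqP => [ji|]; last by rewrite mulr0.
  by move: ne; rewrite -(inj_eq enum_val_inj) enum_rankK_in // -ji eqxx.
rewrite big1; first by rewrite Az // jS.
move=> i _; rewrite !mxE; case: eqP => [ji|]; last by rewrite mulr0.
by move: jS; rewrite ji (enum_valP i).
Qed.

End H.
Unset Implicit Arguments. Set Strict Implicit. Set Printing Implicit Defensive.
Theorem lemma2p2 (C : numClosedFieldType) (n : nat) (W : 'M[C]_(n + n)) :
  (0 < n)%N ->
  W \is normalmx ->
  skew_hamiltonian W ->
  (forall lambda : C, eigenvalue W lambda -> 'Im lambda != 0) ->
  exists (U : 'M[C]_(n + n)) (D : 'M[C]_n),
    [/\ U \is unitarymx, symplecticmx U, is_diag_mx D &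
        W = U *m block_mx D 0 0 (D ^t*) *m U ^t*].
Proof.
move=> n0 Wn Wsh Wim.
set P := spectralmx W; set d := spectral_diag W.
have PU : P \is unitarymx := spectral_unitarymx W.
have WE : W = P^t* *m diag_mx d *m P.
  by rewrite {1}(orthomx_spectralP Wn) invmx_unitary.
have PPt : P *m P^t* = 1%:M := unitarymxP PU.
set J := Jmx C n.
have WJ : W^t* *m J = J *m W.
  have := Wsh; rewrite /skew_hamiltonian ctmul -/J Jct mulmxN.
  by move/oppr_inj.
have WtE : W^t* = P^t* *m diag_mx (map_mx conjC d) *m P.
  by rewrite {1}WE !ctmul trmxCK tr_diag_mx map_diag_mx mulmxA.
set M := P *m J *m P^t*.
have MD : diag_mx (map_mx conjC d) *m M = M *m diag_mx d.
  have := congr1 (fun X => P *m X *m P^t*) WJ; rewrite /= WtE WE !mulmxA PPt mul1mx.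
  by rewrite mulmxtVK.
have dIm : forall i, 'Im (d 0 i) != 0.
  move=> i; apply: Wim; apply/eigenvalueP; exists (row i P).
    rewrite -row_mul {1}WE !mulmxA PPt mul1mx mul_diag_mx; apply/rowP => j.
    by rewrite !mxE.
  apply/eqP => h; have := congr1 (fun X => (X *m P^t*) 0 i) h.
  by rewrite /= -row_mul PPt mul0mx !mxE eqxx /= => /eqP; rewrite oner_eq0.
have Mz : forall i j, (0 < 'Im (d 0 i)) = (0 < 'Im (d 0 j)) -> M i j = 0.
  move=> i j s; apply/eqP; apply: contraT => nz.
  have /matrixP/(_ i j) := MD; rewrite mul_diag_mx mul_mx_diag [LHS]mxE [RHS]mxE [X in X * _ = _]mxE mulrC.
  move/(mulfI nz) => dj.
  have : 'Im (d 0 j) = - 'Im (d 0 i) by rewrite -dj Im_conj.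
  move=> e; move: s; rewrite e oppr_gt0 => s.
  have := dIm i; rewrite (real_neqr_lt (Creal_Im _) (real0 _)) -s orbb => lt.
  by move: s; rewrite lt => /esym; rewrite lt_gtF.
set S := [pred i : 'I_(n + n) | 0 < 'Im (d 0 i)].
have JU : J \is unitarymx by apply/unitarymxP; rewrite JJct.
have MU : M \is unitarymx.
  by rewrite /M !mul_unitarymx // trmxC_unitary.
have kn : (n <= #|S|)%N.
  pose g := @enum_val _ [predC S].
  pose h := @enum_val _ S.
  pose R := (sel C g)^T *m M.
  have RU : R \is unitarymx.
    apply: mul_unitarymx => //; apply/unitarymxP.
    have -> : ((sel C g)^T)^t* = sel C g.
      by apply/matrixP => a b; rewrite !mxE conjC_nat.
    exact/selTsel/enum_val_inj.
  have RE : R = (R *m sel C h) *m (sel C h)^T.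
    rewrite sel_proj // => a j jS.
    rewrite /R sel_mul mxE; apply: Mz.
    have := enum_valP a; rewrite -/(g a) !inE => /negbTE ->.
    by move: jS; rewrite inE => /negbTE ->.
  have := mxrank_unitary RU; rewrite RE => rk.
  have := leq_trans (mxrankM_maxl (R *m sel C h) (sel C h)^T) (rank_leq_col (R *m sel C h)).
  rewrite rk; have := cardC S; rewrite card_ord => e1 e2.
  have e3 : (#|[predC S]| <= #|S|)%N := e2.
  move: e1 e3; set a := #|S|; set b := #|[predC S]|. clearbody a b; lia.
pose f := fun i : 'I_n => @enum_val _ S (widen_ord kn i).
have finj : injective f.
  by move=> x y /enum_val_inj /(congr1 val) /= /val_inj.
have fS : forall i, f i \in S by move=> i; exact: enum_valP.
pose U1 := P^t* *m sel C f.
pose U2 := J^t* *m U1.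
have U1t : U1^t* = (sel C f)^T *m P by rewrite /U1 ctmul trmxCK sel_ct.
have U2t : U2^t* = U1^t* *m J by rewrite /U2 ctmul trmxCK.
have U1U1 : U1^t* *m U1 = 1%:M.
  by rewrite U1t /U1 mulmxA mulmxtVK // selTsel.
have U1JU1 : U1^t* *m J *m U1 = 0.
  have -> : U1^t* *m J *m U1 = (sel C f)^T *m M *m sel C f.
    by rewrite U1t /U1 /M !mulmxA.
  rewrite sel_mul mul_sel; apply/matrixP => i j; move: (Mz (f i) (f j)); clearbody M; rewrite !mxE; apply.
  by move: (fS i) (fS j); rewrite !inE => -> ->.
pose D := diag_mx (\row_i d 0 (f i)).
have Dt : D^t* = diag_mx (\row_i (d ^ conjC) 0 (f i)).
  by rewrite /D tr_diag_mx map_diag_mx; congr diag_mx; apply/rowP => i; rewrite !mxE.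
have WJt : W *m J^t* = J^t* *m W^t*.
  rewrite -[LHS]mul1mx -(JctJ C n) -/J -mulmxA (mulmxA J) -WJ.
  by rewrite -(mulmxA (W^t*)) JJct mulmx1.
have WU1 : W *m U1 = U1 *m D.
  by rewrite /U1 WE !mulmxA mulmxtVK // -mulmxA diag_sel mulmxA.
have WU2 : W *m U2 = U2 *m D^t*.
  rewrite /U2 mulmxA WJt -mulmxA WtE /U1 !mulmxA mulmxtVK //.
  by rewrite -mulmxA diag_sel Dt !mulmxA.
have U2E : U2 = J^t* *m U1 by [].
clearbody U1 U2.
pose U := row_mx U1 U2.
have Ut : U^t* = col_mx (U1^t*) (U2^t*) by rewrite /U tr_row_mx map_col_mx.
have UtU : U^t* *m U = 1%:M.
  rewrite Ut mul_col_row U2t U2E Jct mulNmx !mulmxN.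
  rewrite U1U1 -/J !mulmxA U1JU1 oppr0 -(mulmxA (U1^t*) J J) JJ mulmxN mulmx1 mulNmx opprK U1U1.
  by rewrite -scalar_mx_block.
have UU : U \is unitarymx by apply/unitarymxP; exact: mulmx1C UtU.
exists U, D; split => //.
- rewrite /symplecticmx -/J Ut mul_col_mx mul_col_row U2t U2E Jct mulNmx !mulmxN !mulmxA.
  rewrite -!(mulmxA (U1^t*) J J) JJ !mulmxN !mulmx1 !mulNmx !opprK U1U1 U1JU1.
  by [].
- exact: diag_mx_is_diag.
rewrite -[W in LHS]mulmx1 -(unitarymxP UU) mulmxA; congr (_ *m _).
by rewrite /U mul_mx_row mul_row_block !mulmx0 !addr0 !add0r WU1 WU2.
Qed.
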